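(* Let $$A=\bigoplus_{i\in I}B(H_{\mathrm{in},i}),\quad B=\bigoplus_{j\in J}B(H_{\mathrm{out},j}),\quad C=\bigoplus_{k\in K}B(K_{\mathrm{in},k}),\quad D=\bigoplus_{l\in L}B(K_{\mathrm{out},l}),$$ and let $\mathcal S:\underline{\mathrm{Hom}}(A,B)\to\underline{\mathrm{Hom}}(C,D)$ be a deterministic supermap. Then there exists a unital completely positive map $\mathcal N:A\to C$ such that, for every positive $X\in\underline{\mathrm{Hom}}(A,B)$, $$\mathrm{Tr}_{\mathrm{out}}\big[\mathcal S(X)\big]=\mathcal N\big(\mathrm{Tr}_{\mathrm{out}}[X]\big).$$ Explicitly: - on the right, $\mathrm{Tr}_{\mathrm{out}}[X]=\big(\sum_{j\in J}\mathrm{Tr}_{H_{\mathrm{out},j}}X_{ji}\big)_{i\in I}\in A$; - on the left, $\mathrm{Tr}_{\mathrm{out}}[\mathcal S(X)]=\big(\sum_{l\in L}\mathrm{Tr}_{K_{\mathrm{out},l}}\mathcal S(X)_{lk}\big)_{k\in K}\in C$.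
   Context: Throughout, all Hilbert spaces are finite-dimensional and nonzero, and all index sets are finite and nonempty. **Multimatrix algebras.** A finite-dimensional $C^*$-algebra is written as $A=\bigoplus_{i\in I}B(H_i)$, with elements $X=(X_i)_{i\in I}$. Its trace is $\mathrm{Tr}(X)=\sum_i\mathrm{Tr}(X_i)$, and $X\ge 0$ means every block is positive semidefinite. **The algebra $\underline{\mathrm{Hom}}$ and (TP).** For $A=\bigoplus_{i\in I}B(H_i)$ and $B=\bigoplus_{j\in J}B(K_j)$, set $$\underline{\mathrm{Hom}}(A,B):=\bigoplus_{(j,i)\in J\times I}B(K_j\otimes H_i).$$ An element $X\in\underline{\mathrm{Hom}}(A,B)$ satisfies **(TP)** if $\sum_{j\in J}\mathrm{Tr}_{K_j}(X_{ji})=1_{H_i}$ for every $i\in I$. These positive (TP) elements are exactly the Choi operators of the channels (CPTP maps) $A\to B$. **Partial trace.** For $X\in\underline{\mathrm{Hom}}(A,B)$, define the partial trace over the output as $\mathrm{Tr}_{\mathrm{out}}[X]:=\big(\sum_{j}\mathrm{Tr}_{K_j}X_{ji}\big)_{i\in I}\in A$. **Deterministic supermaps.** A deterministic supermap is a completely positive linear map $\mathcal S:\underline{\mathrm{Hom}}(A,B)\to\underline{\mathrm{Hom}}(C,D)$ sending every positive element satisfying (TP) to an element satisfying (TP). *)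

(* Defs.v *)
From HB Require Import structures.
From mathcomp Require Import all_boot all_order all_algebra.
Set Implicit Arguments. Unset Strict Implicit. Unset Printing Implicit Defensive.
Import Order.TTheory GRing.Theory Num.Theory Num.Def.
Local Open Scope ring_scope.

Section Defs.
Variable F : numClosedFieldType.

Definition adjmx m n (M : 'M[F]_(m, n)) : 'M[F]_(n, m) := map_mx Num.conj M^T.

Definition psdmx n (M : 'M[F]_n) : Prop :=
  adjmx M = M /\ forall v : 'rV[F]_n, 0 <= (v *m M *m adjmx v) 0 0.

(* the multimatrix algebra  \bigoplus_{i in I} B(C^{d i}) *)
Definition mm (I : finType) (d : I -> nat) := forall i : I, 'M[F]_(d i).

Definition mm_pos (I : finType) (d : I -> nat) (X : mm d) : Prop :=
  forall i, psdmx (X i).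

Definition mm_one (I : finType) (d : I -> nat) : mm d := fun i => 1%:M.

Definition mm_linear (I J : finType) (dA : I -> nat) (dB : J -> nat)
  (f : mm dA -> mm dB) : Prop :=
  forall (a : F) (X Y : mm dA) (j : J),
    f (fun i => a *: X i + Y i) j = a *: f X j + f Y j.

(* tensor index: 'I_(m * n) ~ 'I_m * 'I_n (first factor major, Kronecker) *)
Definition unidx m n (r : 'I_(m * n)) : 'I_m * 'I_n :=
  enum_val (cast_ord (esym (mxvec_cast m n)) r).

(* viewing an element of M_n(A) = \bigoplus_i B(C^n (x) C^{d i})
   as an n x n block matrix with entries in A *)
Definition blk (I : finType) (d : I -> nat) n (X : mm (fun i => n * d i))
  (a b : 'I_n) : mm d :=
  fun i => \matrix_(p, q) X i (mxvec_index a p) (mxvec_index b q).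

(* the amplification id_n (x) f : M_n(A) -> M_n(B) *)
Definition ampl (I J : finType) (dA : I -> nat) (dB : J -> nat)
  (f : mm dA -> mm dB) n (X : mm (fun i => n * dA i)) : mm (fun j => n * dB j) :=
  fun j => \matrix_(r, s)
    f (blk X (unidx r).1 (unidx s).1) j (unidx r).2 (unidx s).2.

Definition mm_cp (I J : finType) (dA : I -> nat) (dB : J -> nat)
  (f : mm dA -> mm dB) : Prop :=
  forall n (X : mm (fun i => n * dA i)), mm_pos X -> mm_pos (ampl f X).

Definition mm_unital (I J : finType) (dA : I -> nat) (dB : J -> nat)
  (f : mm dA -> mm dB) : Prop :=
  forall j, f (mm_one dA) j = mm_one dB j.

(* dimensions of Hom(A, B) = \bigoplus_{(j,i)} B(K_j (x) H_i) *)
Definition homd (I J : finType) (dH : I -> nat) (dK : J -> nat) :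
  (J * I)%type -> nat := fun p => (dK p.1 * dH p.2)%N.

Definition ptrace1 m n (M : 'M[F]_(m * n)) : 'M[F]_n :=
  \matrix_(p, q) \sum_(a < m) M (mxvec_index a p) (mxvec_index a q).

Definition trout (I J : finType) (dH : I -> nat) (dK : J -> nat)
  (X : mm (homd dH dK)) : mm dH :=
  fun i => \sum_(j : J) (ptrace1 (X (j, i) : 'M[F]_(dK j * dH i)) : 'M[F]_(dH i)).

Definition tp (I J : finType) (dH : I -> nat) (dK : J -> nat)
  (X : mm (homd dH dK)) : Prop :=
  forall i, trout X i = 1%:M.

Definition det_supermap (I J K L : finType) (dHi : I -> nat) (dHo : J -> nat)
  (dKi : K -> nat) (dKo : L -> nat)
  (S : mm (homd dHi dHo) -> mm (homd dKi dKo)) : Prop :=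
  [/\ mm_linear S, mm_cp S &
      forall X, mm_pos X -> tp X -> tp (S X)].

End Defs.

(* Main.v *)
Require Import Defs.
From HB Require Import structures.
From mathcomp Require Import all_boot all_order all_algebra.
From mathcomp Require Import ring.
From Stdlib Require Import FunctionalExtensionality.
Import Order.TTheory GRing.Theory Num.Theory.
Local Open Scope ring_scope.

Module Helpers.
Set Implicit Arguments. Unset Strict Implicit. Unset Printing Implicit Defensive.

Section Psd.
Variable F : numClosedFieldType.

Lemma adjmxE m n (M : 'M[F]_(m, n)) i j : adjmx M i j = (M j i)^*.
Proof. by rewrite /adjmx mxE mxE. Qed.

Lemma adjmxK m n (M : 'M[F]_(m, n)) : adjmx (adjmx M) = M.
Proof. by apply/matrixP => i j; rewrite !adjmxE conjCK. Qed.

Lemma adjmxM m n p (A : 'M[F]_(m, n)) (B : 'M[F]_(n, p)) :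
  adjmx (A *m B) = adjmx B *m adjmx A.
Proof.
apply/matrixP => i j; rewrite adjmxE !mxE rmorph_sum; apply: eq_bigr => k _.
by rewrite !adjmxE rmorphM mulrC.
Qed.

Lemma form_ge0 n (v : 'rV[F]_n) : 0 <= (v *m adjmx v) 0 0.
Proof.
rewrite mxE; apply: sumr_ge0 => k _; rewrite adjmxE; exact: mul_conjC_ge0.
Qed.

Lemma psd_congr m k (M : 'M[F]_m) (T : 'M[F]_(m, k)) :
  psdmx M -> psdmx (adjmx T *m M *m T).
Proof.
move=> [hM pM]; split.
  by rewrite !adjmxM adjmxK hM mulmxA.
move=> v; have := pM (v *m adjmx T).
by rewrite adjmxM adjmxK !mulmxA.
Qed.

Lemma psd_sel m k (M : 'M[F]_m) (f : 'I_k -> 'I_m) (g : 'I_k -> F) :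
  psdmx M -> psdmx (\matrix_(r, s) ((g r)^* * g s * M (f r) (f s))).
Proof.
move=> /(psd_congr (\matrix_(u, r) (g r * (u == f r)%:R))).
suff -> : adjmx (\matrix_(u, r) (g r * (u == f r)%:R)) *m M *m
   (\matrix_(u, r) (g r * (u == f r)%:R)) =
   \matrix_(r, s) ((g r)^* * g s * M (f r) (f s)) by [].
apply/matrixP => r s; rewrite !mxE (bigD1 (f s)) //= big1 ?addr0; last first.
  by move=> u /negbTE hu; rewrite mxE hu mulr0 mulr0.
rewrite [X in _ * X]mxE eqxx mulr1 mxE (bigD1 (f r)) //= big1 ?addr0; last first.
  by move=> u /negbTE hu; rewrite adjmxE mxE hu mulr0 rmorph0 mul0r.
by rewrite adjmxE mxE eqxx mulr1 -!mulrA [_ * g s]mulrC.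
Qed.

Lemma psd_sel1 m k (M : 'M[F]_m) (f : 'I_k -> 'I_m) :
  psdmx M -> psdmx (\matrix_(r, s) M (f r) (f s)).
Proof.
move=> /(psd_sel f (fun _ => 1)).
suff -> : \matrix_(r, s) ((1 : F)^* * 1 * M (f r) (f s)) = \matrix_(r, s) M (f r) (f s) by [].
by apply/matrixP => r s; rewrite !mxE rmorph1 !mul1r.
Qed.

Lemma psd0 n : psdmx (0 : 'M[F]_n).
Proof.
split; first by apply/matrixP => i j; rewrite adjmxE !mxE rmorph0.
by move=> v; rewrite mulmx0 mul0mx mxE.
Qed.

Lemma psdD n (A B : 'M[F]_n) : psdmx A -> psdmx B -> psdmx (A + B).
Proof.
move=> [hA pA] [hB pB]; split.
  apply/matrixP => i j; rewrite adjmxE !mxE rmorphD.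
  by rewrite /= -(adjmxE A) -(adjmxE B) hA hB.
by move=> v; rewrite mulmxDr mulmxDl mxE addr_ge0.
Qed.

Lemma psd_sum (T : finType) (P : pred T) n (A : T -> 'M[F]_n) :
  (forall t, P t -> psdmx (A t)) -> psdmx (\sum_(t | P t) A t).
Proof.
move=> h; apply: (big_ind (@psdmx F n)) => //; [exact: psd0 | exact: psdD].
Qed.

Lemma psdZ n (c : F) (A : 'M[F]_n) : 0 <= c -> psdmx A -> psdmx (c *: A).
Proof.
move=> c0 [hA pA]; split.
  apply/matrixP => i j; rewrite adjmxE !mxE rmorphM /= geC0_conj //.
  by rewrite -(adjmxE A) hA.
by move=> v; rewrite -scalemxAr -scalemxAl mxE mulr_ge0.
Qed.

Lemma psd1 n : psdmx (1%:M : 'M[F]_n).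
Proof.
split; first by apply/matrixP => i j; rewrite adjmxE !mxE eq_sym; case: (_ == _); rewrite ?rmorph1 ?rmorph0.
by move=> v; rewrite mulmx1 form_ge0.
Qed.

Lemma normprod_le (x y s : F) : `|x| ^+ 2 <= s -> `|y| ^+ 2 <= s -> `|x| * `|y| <= s.
Proof.
move=> hx hy; case/orP: (real_leVge (normr_real x) (normr_real y)) => h.
  by apply: le_trans hy; rewrite expr2 ler_wpM2r.
by apply: le_trans hx; rewrite expr2 ler_wpM2l.
Qed.

Lemma form_sum n (v : 'rV[F]_n) : (v *m adjmx v) 0 0 = \sum_p `|v 0 p| ^+ 2.
Proof. by rewrite mxE; apply: eq_bigr => p _; rewrite adjmxE normCK. Qed.

Lemma psd_shift n (a : 'M[F]_n) (c : F) :
  psdmx a -> \sum_p \sum_q `|a p q| <= c -> psdmx (c *: 1%:M - a).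
Proof.
move=> [ha pa] hc.
have c0 : 0 <= c by apply: le_trans hc; apply: sumr_ge0 => p _; apply: sumr_ge0.
split.
  apply/matrixP => i j; rewrite adjmxE !mxE rmorphB /= rmorphM /= geC0_conj //.
  rewrite -(adjmxE a) ha eq_sym; congr (_ * _ - _).
  by case: (_ == _); rewrite /= ?rmorph1 ?rmorph0.
move=> v.
rewrite scalemx1 mulmxBr mul_mx_scalar mulmxBl -scalemxAl.
rewrite [X in 0 <= X]mxE [X in 0 <= _ + X]mxE [X in 0 <= X + _]mxE subr_ge0.
have q0 := pa v.
rewrite -(ger0_norm q0).
set S := (v *m adjmx v) 0 0.
have hS : forall p, `|v 0 p| ^+ 2 <= S.
  move=> p; rewrite /S form_sum (bigD1 p) //= lerDl; apply: sumr_ge0 => *; exact: exprn_ge0.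
have S0 : 0 <= S by apply: form_ge0.
apply: le_trans (_ : (\sum_p \sum_q `|a p q|) * S <= c * S); last by rewrite ler_wpM2r.
rewrite mxE mulr_suml.
under [X in _ <= X]eq_bigr do rewrite mulr_suml.
rewrite exchange_big /=.
apply: le_trans (ler_norm_sum _ _ _) _; apply: ler_sum => q _.
rewrite mxE adjmxE normrM norm_conjC.
apply: le_trans (ler_wpM2r (normr_ge0 _) (ler_norm_sum _ _ _)) _.
rewrite mulr_suml; apply: ler_sum => p _.
rewrite normrM [`|v 0 p| * _]mulrC -mulrA; apply: ler_wpM2l => //.
exact: normprod_le.
Qed.
End Psd.

Section Maps.
Variable F : numClosedFieldType.

Lemma unidxK m n (a : 'I_m) (p : 'I_n) : unidx (mxvec_index a p) = (a, p).
Proof. by rewrite /unidx /mxvec_index cast_ordK enum_rankK. Qed.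

Lemma psd_ptrace1 m n (M : 'M[F]_(m * n)) : psdmx M -> psdmx (ptrace1 M).
Proof.
move=> hM.
have -> : ptrace1 M = \sum_(x < m) \matrix_(p, q) M (mxvec_index x p) (mxvec_index x q).
  by apply/matrixP => p q; rewrite summxE !mxE; apply: eq_bigr => x _; rewrite mxE.
by apply: psd_sum => x _; apply: psd_sel1.
Qed.

Lemma ptrace1_lin m n (s : F) (A B : 'M[F]_(m * n)) :
  ptrace1 (s *: A + B) = s *: ptrace1 A + ptrace1 B.
Proof.
apply/matrixP => p q; rewrite !mxE mulr_sumr -big_split /=.
by apply: eq_bigr => x _; rewrite !mxE.
Qed.

Lemma trout_linP (I J : finType) (dH : I -> nat) (dK : J -> nat)
  (Z U V : mm F (homd dH dK)) (s : F) :
  (forall t, Z t = s *: U t + V t) ->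
  forall i, trout Z i = s *: trout U i + trout V i.
Proof.
move=> h i; rewrite /trout scaler_sumr -big_split /=.
by apply: eq_bigr => j _; rewrite h ptrace1_lin.
Qed.

Lemma trout_pos (I J : finType) (dH : I -> nat) (dK : J -> nat)
  (X : mm F (homd dH dK)) : mm_pos X -> mm_pos (trout X).
Proof. move=> hX i; apply: psd_sum => j _; exact: (@psd_ptrace1 (dK j) (dH i) (X (j, i)) (hX (j, i))). Qed.

Definition gsel (J : finType) (j0 j : J) n (x : 'I_n) : F :=
  ((j == j0) && (val x == 0%N))%:R.

Definition embE (I J : finType) (dH : I -> nat) (dK : J -> nat) (j0 : J)
  (a : mm F dH) : mm F (homd dH dK) :=
  fun t => (\matrix_(r < dK t.1 * dH t.2, s < dK t.1 * dH t.2)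
     (gsel j0 t.1 (unidx r).1 * gsel j0 t.1 (unidx s).1 *
        a t.2 (unidx r).2 (unidx s).2) : 'M_(dK t.1 * dH t.2)).

Lemma embE_pos (I J : finType) (dH : I -> nat) (dK : J -> nat) (j0 : J)
  (a : mm F dH) : mm_pos a -> mm_pos (embE dK j0 a).
Proof.
move=> ha t.
have := psd_sel (fun r : 'I_(dK t.1 * dH t.2) => (unidx r).2)
   (fun r => gsel j0 t.1 (unidx r).1) (ha t.2).
congr psdmx; apply/matrixP => r s; rewrite !mxE /gsel conjC_nat //.
Qed.

Lemma embE_lin (I J : finType) (dH : I -> nat) (dK : J -> nat) (j0 : J)
  (s : F) (X Y : mm F dH) :
  embE dK j0 (fun i => s *: X i + Y i) = fun t => s *: embE dK j0 X t + embE dK j0 Y t.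
Proof.
apply: functional_extensionality_dep => t; apply/matrixP => r q.
rewrite !mxE; ring.
Qed.

Lemma trout_E (I J : finType) (dH : I -> nat) (dK : J -> nat) (j0 : J)
  (h0 : (0 < dK j0)%N) (a : mm F dH) i : trout (embE dK j0 a) i = a i.
Proof.
apply/matrixP => p q; rewrite /trout summxE (bigD1 j0) //= big1 ?addr0; last first.
  move=> j hj; rewrite mxE big1 // => x _; rewrite mxE /gsel /= (negbTE hj) /=.
  by rewrite !mul0r.
rewrite mxE (bigD1 (Ordinal h0)) //= big1 ?addr0; last first.
  move=> x hx; rewrite mxE unidxK /gsel eqxx /=.
  have -> : (val x == 0%N) = false.
    by apply/negbTE; apply: contra hx => /eqP h; apply/eqP/val_inj.
  by rewrite !mul0r.
by rewrite mxE !unidxK /gsel eqxx /= mul1r mul1r.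
Qed.

Lemma ampl_comp (I J K : finType) (dA : I -> nat) (dB : J -> nat) (dC : K -> nat)
  (f : mm F dB -> mm F dC) (g : mm F dA -> mm F dB) n (X : mm F (fun i => n * dA i)) :
  ampl f (ampl g X) = ampl (fun Z => f (g Z)) X.
Proof.
apply: functional_extensionality_dep => k; apply/matrixP => r s; rewrite !mxE.
have -> : blk (ampl g X) (unidx r).1 (unidx s).1 = g (blk X (unidx r).1 (unidx s).1) => //.
apply: functional_extensionality_dep => j; apply/matrixP => p q.
by rewrite !mxE !unidxK.
Qed.

Lemma embE_cp (I J : finType) (dH : I -> nat) (dK : J -> nat) (j0 : J) :
  mm_cp (embE (dH := dH) dK j0).
Proof.
move=> n X hX t.
have := psd_sel
   (fun r : 'I_(n * (dK t.1 * dH t.2)) => mxvec_index (unidx r).1 (unidx (unidx r).2).2)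
   (fun r => gsel j0 t.1 (unidx (unidx r).2).1) (hX t.2).
congr psdmx; apply/matrixP => r s; rewrite !mxE /gsel conjC_nat //.
Qed.

Lemma trout_cp (I J : finType) (dH : I -> nat) (dK : J -> nat) :
  mm_cp (@trout F I J dH dK).
Proof.
move=> n Y hY i.
have -> : ampl (@trout F I J dH dK) Y i =
  \sum_j \sum_(x < dK j) (\matrix_(r < n * dH i, s < n * dH i)
     (Y (j, i) : 'M[F]_(n * (dK j * dH i))) (mxvec_index (unidx r).1 (mxvec_index x (unidx r).2))
              (mxvec_index (unidx s).1 (mxvec_index x (unidx s).2)) : 'M[F]_(n * dH i)).
  apply/matrixP => r s; rewrite mxE summxE /trout summxE; apply: eq_bigr => j _.
  rewrite summxE mxE; apply: eq_bigr => x _; rewrite !mxE //.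
apply: psd_sum => j _; apply: psd_sum => x _.
have := (@psd_sel1 F (n * (dK j * dH i)) (n * dH i) (Y (j, i))
  (fun r => mxvec_index (unidx r).1 (mxvec_index x (unidx r).2)) (hY (j, i))).
by [].
Qed.

End Maps.
End Helpers.
Import Helpers.

Lemma ptrace1_scale (F : numClosedFieldType) m n (s : F) (A : 'M[F]_(m * n)) :
  ptrace1 (s *: A) = s *: ptrace1 A.
Proof.
apply/matrixP => p q; rewrite !mxE mulr_sumr.
by apply: eq_bigr => x _; rewrite !mxE.
Qed.

Lemma trout_scale (F : numClosedFieldType) (I J : finType) (dH : I -> nat) (dK : J -> nat)
  (U : mm F (homd dH dK)) (s : F) i :
  trout (fun t => s *: U t) i = s *: trout U i.
Proof.
rewrite /trout scaler_sumr; apply: eq_bigr => j _; exact: ptrace1_scale.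
Qed.

Theorem lemma3p4 (F : numClosedFieldType) (I J K L : finType)
  (dHin : I -> nat) (dHout : J -> nat) (dKin : K -> nat) (dKout : L -> nat)
  (hI : (0 < #|I|)%N) (hJ : (0 < #|J|)%N) (hK : (0 < #|K|)%N) (hL : (0 < #|L|)%N)
  (hdHin : forall i, (0 < dHin i)%N) (hdHout : forall j, (0 < dHout j)%N)
  (hdKin : forall k, (0 < dKin k)%N) (hdKout : forall l, (0 < dKout l)%N)
  (S : mm F (homd dHin dHout) -> mm F (homd dKin dKout)) :
  det_supermap S ->
  exists N : mm F dHin -> mm F dKin,
    [/\ mm_linear N, mm_cp N, mm_unital N &
        forall X : mm F (homd dHin dHout), mm_pos X ->
          forall k : K, trout (S X) k = N (trout X) k].
Proof.
move=> [Hlin Hcp Htp].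
pose j0 : J := enum_val (Ordinal hJ).
have h0 : (0 < dHout j0)%N := hdHout j0.
pose E := @embE F I J dHin dHout j0.
exists (fun Z => trout (S (E Z))); split.
- move=> s X Y k /=; rewrite /E embE_lin.
  by apply: trout_linP => t; exact: Hlin.
- move=> n X hX.
  have -> : ampl (fun Z => trout (S (E Z))) X = ampl (@trout F K L dKin dKout) (ampl S (ampl E X)).
    by rewrite !ampl_comp.
  by apply: trout_cp; apply: Hcp; apply: embE_cp.
- move=> k; apply: Htp.
    by apply: embE_pos => i; apply: psd1.
  by move=> i; rewrite /E trout_E.
move=> X hX k.
pose a := trout X.
pose c : F := 1 + \sum_i \sum_p \sum_q `|a i p q|.
have hsum0 : 0 <= \sum_i \sum_p \sum_q `|a i p q|.
  by apply: sumr_ge0 => i _; apply: sumr_ge0 => p _; apply: sumr_ge0.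
have c0 : 0 < c by apply: (lt_le_trans ltr01); rewrite /c lerDl.
have hca : forall i, \sum_p \sum_q `|a i p q| <= c.
  move=> i; apply: le_trans (_ : _ <= \sum_i \sum_p \sum_q `|a i p q|) _.
    rewrite [X in _ <= X](bigD1 i) //= lerDl; apply: sumr_ge0 => i' _.
    by apply: sumr_ge0 => p _; apply: sumr_ge0.
  by rewrite /c lerDr.
have ci0 : 0 <= c^-1 by rewrite invr_ge0 ltW.
have cne0 : c != 0 by rewrite gt_eqF.
pose W := E (fun i => c *: 1%:M - a i).
have hW : mm_pos W.
  by apply: embE_pos => i; apply: psd_shift => //; apply: trout_pos.
pose W' := fun t => c^-1 *: W t.
pose Y1 := fun t => c^-1 *: X t + W' t.
pose Y2 := fun t => c^-1 *: E a t + W' t.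
have trW' : forall i, trout W' i = c^-1 *: (c *: 1%:M - a i).
  by move=> i; rewrite /W' trout_scale /W /E trout_E.
have alg : forall i, c^-1 *: a i + c^-1 *: (c *: 1%:M - a i) = 1%:M.
  by move=> i; rewrite scalerBr scalerA mulVf // scale1r addrC subrK.
have H1 : trout (S Y1) k = 1%:M.
  apply: Htp.
    by move=> t; apply: psdD; [apply: psdZ => //; apply: hX | apply: psdZ => //; apply: hW].
  by move=> i; rewrite (@trout_linP F I J dHin dHout Y1 X W' c^-1) // trW' alg.
have H2 : trout (S Y2) k = 1%:M.
  apply: Htp.
    move=> t; apply: psdD; last by apply: psdZ => //; apply: hW.
    by apply: psdZ => //; apply: embE_pos => i; apply: trout_pos.
  by move=> i; rewrite (@trout_linP F I J dHin dHout Y2 (E a) W' c^-1) // trW' /E trout_E // alg.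
rewrite (@trout_linP F K L dKin dKout (S Y1) (S X) (S W') c^-1) in H1; last first.
  by move=> t; apply: Hlin.
rewrite (@trout_linP F K L dKin dKout (S Y2) (S (E a)) (S W') c^-1) in H2; last first.
  by move=> t; apply: Hlin.
have := H1; rewrite -H2 => /addIr h.
by rewrite -[LHS]scale1r -(mulfV cne0) -scalerA h scalerA mulfV // scale1r.
Qed.
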